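(* There is a Borel function $f:(\omega^\omega)^3\to\omega^\omega$ which has no superperfect free subset.
   Context: A tree $T\subseteq\omega^{<\omega}$ is superperfect if for every $\sigma\in T$ there is $\tau\supseteq\sigma$ in $T$ such that $\tau^\frown\langle n\rangle\in T$ for infinitely many $n$; a superperfect set is a set of the form $[T]$ (the infinite branches of $T$) for a superperfect tree $T$. A set $A\subseteq\omega^\omega$ is free for $f:(\omega^\omega)^3\to\omega^\omega$ if for all $(a_0,a_1,a_2)\in A^3$, $f(a_0,a_1,a_2)\in\{a_0,a_1,a_2\}\cup(\omega^\omega\setminus A)$. *)

(* Defs.v *)
From Stdlib Require Import List Arith.
Import ListNotations.

Definition baire := nat -> nat.
Definition triple := (baire * baire * baire)%type.

Definition restr (x : baire) (n : nat) : list nat := map x (seq 0 n).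

Definition open_baire (U : baire -> Prop) : Prop :=
  forall x, U x -> exists n, forall y, restr y n = restr x n -> U y.

Definition open_triple (U : triple -> Prop) : Prop :=
  forall a, U a -> exists n, forall b,
      restr (fst (fst b)) n = restr (fst (fst a)) n ->
      restr (snd (fst b)) n = restr (snd (fst a)) n ->
      restr (snd b) n = restr (snd a) n -> U b.

Inductive borel_triple : (triple -> Prop) -> Prop :=
  | borel_open U : open_triple U -> borel_triple U
  | borel_compl U : borel_triple U -> borel_triple (fun a => ~ U a)
  | borel_cunion (F : nat -> triple -> Prop) :
      (forall i, borel_triple (F i)) -> borel_triple (fun a => exists i, F i a)
  | borel_ext U V : (forall a, U a <-> V a) -> borel_triple U -> borel_triple V.

Definition borel_fun (f : triple -> baire) : Prop :=
  forall U, open_baire U -> borel_triple (fun a => U (f a)).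

Definition is_tree (T : list nat -> Prop) : Prop :=
  T [] /\ forall s t, T (s ++ t) -> T s.

Definition extends (t s : list nat) : Prop := exists u, t = s ++ u.

Definition superperfect_tree (T : list nat -> Prop) : Prop :=
  is_tree T /\
  forall s, T s -> exists t, extends t s /\ T t /\
     (forall m, exists n, m <= n /\ T (t ++ [n])).

Definition branches (T : list nat -> Prop) (x : baire) : Prop :=
  forall n, T (restr x n).

Definition superperfect_set (A : baire -> Prop) : Prop :=
  exists T, superperfect_tree T /\ forall x, A x <-> branches T x.

Definition free_for (f : triple -> baire) (A : baire -> Prop) : Prop :=
  forall a0 a1 a2, A a0 -> A a1 -> A a2 ->
    let y := f (a0, a1, a2) in
    y = a0 \/ y = a1 \/ y = a2 \/ ~ A y.

(* Main.v *)
Require Import Defs.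
From Stdlib Require Import Bool List Arith Lia PeanoNat ClassicalEpsilon Classical FunctionalExtensionality.
Import ListNotations.

Fixpoint mx (x y z : baire) (i : nat) : nat :=
  match i with 0 => 0 | S i' => Nat.max (mx x y z i') (Nat.max (x i') (Nat.max (y i') (z i'))) end.

Definition rec3 (x y z : baire) (i : nat) : option nat :=
  let M := mx x y z i in
  if (M <? x i) && (y i <? x i) && (z i <? x i) then Some 0
  else if (M <? y i) && (x i <? y i) && (z i <? y i) then Some 1
  else if (M <? z i) && (x i <? z i) && (y i <? z i) then Some 2
  else None.

Record dst := mkd { dlast : option nat; dout : list nat; dcnt : nat }.

Definition upd (s : dst) (r : option nat) : dst :=
  match r with
  | None => s
  | Some j => match dlast s with
     | None => mkd (Some j) (dout s) (dcnt s)
     | Some p => if p =? j then s else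
         if j =? (S p) mod 3 then mkd (Some j) (dout s ++ [dcnt s]) 0
         else mkd (Some j) (dout s) (S (dcnt s))
     end
  end.

Fixpoint dstate (x y z : baire) (N : nat) : dst :=
  match N with 0 => mkd None [] 0 | S N' => upd (dstate x y z N') (rec3 x y z N') end.

Definition outN (a : triple) (N : nat) := dout (dstate (fst (fst a)) (snd (fst a)) (snd a) N).

Definition FF (a : triple) : baire := fun n =>
  nth n (outN a (epsilon (inhabits 0) (fun N => n < length (outN a N)))) 0.

Lemma mx_ext x y z x' y' z' N :
  (forall j, j < N -> x j = x' j /\ y j = y' j /\ z j = z' j) ->
  forall i, i <= N -> mx x y z i = mx x' y' z' i.
Proof.
  intros H i; induction i; simpl; intros Hi; auto.
  destruct (H i) as [H1 [H2 H3]]; [lia|]. rewrite IHi by lia. congruence.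
Qed.

Lemma dstate_ext x y z x' y' z' N :
  (forall j, j < N -> x j = x' j /\ y j = y' j /\ z j = z' j) ->
  dstate x y z N = dstate x' y' z' N.
Proof.
  intros H. assert (forall i, i <= N -> dstate x y z i = dstate x' y' z' i).
  { induction i; simpl; intros Hi; auto. rewrite IHi by lia. f_equal.
    unfold rec3. rewrite (mx_ext x y z x' y' z' N H i) by lia.
    destruct (H i) as [H1 [H2 H3]]; [lia|]. rewrite H1, H2, H3. reflexivity. }
  apply H0; lia.
Qed.

Lemma restr_nth (x : baire) n j : j < n -> nth j (restr x n) 0 = x j.
Proof.
  intros Hj. unfold restr. rewrite nth_indep with (d' := x 0).
  2:{ rewrite length_map, length_seq; lia. }
  rewrite map_nth, seq_nth by lia. reflexivity.
Qed.

Lemma restr_eq_pt (x x' : baire) n : restr x n = restr x' n -> forall j, j < n -> x j = x' j.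
Proof. intros H j Hj. rewrite <- (restr_nth x n j Hj), <- (restr_nth x' n j Hj), H. reflexivity. Qed.

Lemma open_outN (P : list nat -> Prop) N : open_triple (fun a => P (outN a N)).
Proof.
  intros a Ha. exists N. intros b H1 H2 H3. unfold outN in *.
  rewrite (dstate_ext (fst (fst b)) (snd (fst b)) (snd b) (fst (fst a)) (snd (fst a)) (snd a) N); auto.
  intros j Hj. repeat split; eapply restr_eq_pt; eauto.
Qed.

Lemma borel_and (U V : triple -> Prop) : borel_triple U -> borel_triple V -> borel_triple (fun a => U a /\ V a).
Proof.
  intros HU HV.
  apply borel_ext with (U := fun a => ~ (exists i, (fun i a => match i with 0 => ~ U a | _ => ~ V a end) i a)).
  { intros a; split.
    - intros H. split; apply NNPP; intros C; apply H; [exists 0 | exists 1]; auto.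
    - intros [H1 H2] [i Hi]. destruct i; auto. }
  apply borel_compl. apply borel_cunion. intros [|i]; apply borel_compl; auto.
Qed.

Lemma borel_or (U V : triple -> Prop) : borel_triple U -> borel_triple V -> borel_triple (fun a => U a \/ V a).
Proof.
  intros HU HV.
  apply borel_ext with (U := fun a => exists i, (fun i a => match i with 0 => U a | _ => V a end) i a).
  { intros a; split.
    - intros [[|i] Hi]; auto.
    - intros [H|H]; [exists 0 | exists 1]; auto. }
  apply borel_cunion. intros [|i]; auto.
Qed.

Lemma borel_const (P : Prop) : borel_triple (fun _ => P).
Proof. apply borel_open. intros a Ha. exists 0. auto. Qed.

Lemma dout_prefix x y z N : exists u, dout (dstate x y z (S N)) = dout (dstate x y z N) ++ u.
Proof.
  simpl. unfold upd. destruct (rec3 x y z N) as [j|];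
  [destruct (dlast (dstate x y z N)) as [p|];
   [destruct (p =? j); [|destruct (j =? S p mod 3)]|]|].
  all: simpl; first [exists []; rewrite app_nil_r; reflexivity | eexists; reflexivity].
Qed.

Lemma outN_prefix a N N' : N <= N' -> exists u, outN a N' = outN a N ++ u.
Proof.
  induction 1. exists []; rewrite app_nil_r; auto.
  destruct IHle as [u Hu]. unfold outN in *.
  destruct (dout_prefix (fst (fst a)) (snd (fst a)) (snd a) m) as [v Hv].
  rewrite Hv, Hu, <- app_assoc. eauto.
Qed.

Lemma outN_nth a N N' n : n < length (outN a N) -> n < length (outN a N') ->
  nth n (outN a N) 0 = nth n (outN a N') 0.
Proof.
  intros H1 H2. destruct (le_ge_dec N N') as [H|H].
  - destruct (outN_prefix a N N' H) as [u Hu]. rewrite Hu, app_nth1; auto.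
  - destruct (outN_prefix a N' N H) as [u Hu]. rewrite Hu, app_nth1; auto.
Qed.

Lemma FF_coord n m : borel_triple (fun a => FF a n = m).
Proof.
  apply borel_ext with (U := fun a => (exists N, (fun N a => n < length (outN a N) /\ nth n (outN a N) 0 = m) N a)
     \/ ((~ exists N, (fun N a => n < length (outN a N)) N a) /\ m = 0)).
  { intros a. unfold FF. split.
    - intros [[N [H1 H2]]|[H1 H2]].
      + assert (Hex : exists N, n < length (outN a N)) by eauto.
        pose proof (epsilon_spec (inhabits 0) _ Hex) as He; cbv beta in He.
        rewrite (outN_nth a _ N n He H1). auto.
      + rewrite nth_overflow; auto.
        destruct (Nat.lt_ge_cases n (length (outN a (epsilon (inhabits 0) (fun N => n < length (outN a N)))))) as [C|C]; auto.
        exfalso; apply H1; eauto.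
    - intros H. destruct (classic (exists N, n < length (outN a N))) as [Hex|Hn].
      + left. pose proof (epsilon_spec (inhabits 0) _ Hex) as He; cbv beta in He. eexists; split; eauto.
      + right. split; auto. rewrite nth_overflow in H; auto.
        destruct (Nat.lt_ge_cases n (length (outN a (epsilon (inhabits 0) (fun N => n < length (outN a N)))))) as [C|C]; auto.
        exfalso; apply Hn; eauto. }
  apply borel_or.
  - apply borel_cunion. intros N. apply borel_open.
    apply (open_outN (fun l => n < length l /\ nth n l 0 = m)).
  - apply borel_and; [|apply borel_const]. apply borel_compl. apply borel_cunion. intros N.
    apply borel_open. apply (open_outN (fun l => n < length l)).
Qed.

Lemma restr_S (x : baire) n : restr x (S n) = restr x n ++ [x n].
Proof. unfold restr. rewrite seq_S, map_app. reflexivity. Qed.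

Lemma borel_restr n : forall (P : list nat -> Prop), borel_triple (fun a => P (restr (FF a) n)).
Proof.
  induction n; intros P.
  - apply (borel_const (P [])).
  - apply borel_ext with (U := fun a => exists m, (fun m a => FF a n = m /\ P (restr (FF a) n ++ [m])) m a).
    { intros a. rewrite restr_S. split.
      - intros [m [H1 H2]]. subst; auto.
      - intros H. eauto. }
    apply borel_cunion. intros m. apply borel_and. apply FF_coord.
    apply (IHn (fun l => P (l ++ [m]))).
Qed.

Lemma FF_borel : borel_fun FF.
Proof.
  intros U HU.
  apply borel_ext with (U := fun a => exists n, (fun n a => (fun l => forall y, restr y n = l -> U y) (restr (FF a) n)) n a).
  { intros a. split.
    - intros [n Hn]. apply (Hn (FF a)). reflexivity.
    - intros H. destruct (HU _ H) as [n Hn]. exists n. simpl. intros y Hy. apply Hn; auto. }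
  apply borel_cunion. intros n. apply (borel_restr n (fun l => forall y, restr y n = l -> U y)).
Qed.

Definition prefix (l l' : list nat) := exists u, l' = l ++ u.
Definition splitting (T : list nat -> Prop) t := forall m, exists n, m <= n /\ T (t ++ [n]).

Definition sc (T : list nat -> Prop) s := epsilon (inhabits 0) (fun n => T (s ++ [n])).
Definition bigc (T : list nat -> Prop) s m := epsilon (inhabits 0) (fun n => m <= n /\ T (s ++ [n])).
Definition spn (T : list nat -> Prop) s :=
  epsilon (inhabits (@nil nat)) (fun t => extends t s /\ T t /\ splitting T t).
Fixpoint ext (T : list nat -> Prop) s k := match k with 0 => s | S k' => ext T s k' ++ [sc T (ext T s k')] end.

Lemma prefix_refl l : prefix l l.
Proof. exists []; rewrite app_nil_r; auto. Qed.
Lemma prefix_trans a b c : prefix a b -> prefix b c -> prefix a c.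
Proof. intros [u Hu] [v Hv]; subst; exists (u ++ v); rewrite app_assoc; auto. Qed.
Lemma prefix_len a b : prefix a b -> length a <= length b.
Proof. intros [u Hu]; subst; rewrite length_app; lia. Qed.
Lemma prefix_nth a b i : prefix a b -> i < length a -> nth i b 0 = nth i a 0.
Proof. intros [u Hu] H; subst; apply app_nth1; auto. Qed.

Lemma tree_prefix T s u : superperfect_tree T -> T (s ++ u) -> T s.
Proof. intros [[_ H] _] Hs; eapply H; eauto. Qed.
Lemma tree_prefix' T s t : superperfect_tree T -> prefix s t -> T t -> T s.
Proof. intros HT [u Hu] Ht; subst; eapply tree_prefix; eauto. Qed.

Lemma succ_ex T s : superperfect_tree T -> T s -> exists n, T (s ++ [n]).
Proof.
  intros HT Hs. destruct HT as [Htr Hsp]. destruct (Hsp s Hs) as [t [[u Hu] [Ht Hn]]].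
  destruct u as [|a u].
  - rewrite app_nil_r in Hu; subst. destruct (Hn 0) as [n [_ Hn']]; eauto.
  - exists a. subst. apply (tree_prefix T (s ++ [a]) u). split; auto.
    rewrite <- app_assoc; auto.
Qed.

Lemma sc_spec T s : superperfect_tree T -> T s -> T (s ++ [sc T s]).
Proof. intros HT Hs. unfold sc. apply (epsilon_spec (inhabits 0) (fun n => T (s ++ [n]))). apply succ_ex; auto. Qed.

Lemma ext_spec T s k : superperfect_tree T -> T s ->
  T (ext T s k) /\ length (ext T s k) = length s + k /\ prefix s (ext T s k).
Proof.
  intros HT Hs. induction k; simpl.
  - split; [auto|split; [lia|apply prefix_refl]].
  - destruct IHk as [H1 [H2 H3]]. repeat split.
    + apply sc_spec; auto.
    + rewrite length_app, H2; simpl; lia.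
    + eapply prefix_trans; eauto. eexists; eauto.
Qed.

Lemma ext_mono T s k : prefix (ext T s k) (ext T s (S k)).
Proof. simpl. eexists; eauto. Qed.

Lemma spn_spec T s : superperfect_tree T -> T s ->
  prefix s (spn T s) /\ T (spn T s) /\ splitting T (spn T s).
Proof.
  intros HT Hs. unfold spn.
  pose proof (epsilon_spec (inhabits (@nil nat)) (fun t => extends t s /\ T t /\ splitting T t)) as H.
  cbv beta in H. destruct H as [[u Hu] [H2 H3]].
  - destruct HT as [_ Hsp]. destruct (Hsp s Hs) as [t Ht]. exists t. exact Ht.
  - repeat split; auto. exists u; auto.
Qed.

Lemma bigc_spec T s m : splitting T s -> m <= bigc T s m /\ T (s ++ [bigc T s m]).
Proof.
  intros Hs. unfold bigc. apply (epsilon_spec (inhabits 0) (fun n => m <= n /\ T (s ++ [n]))). apply Hs.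
Qed.

Record stg := mkst { L0 : list nat; L1 : list nat; L2 : list nat; hh : nat; gn : nat; gc : nat }.
Definition getL (s : stg) (j : nat) := match j with 0 => L0 s | 1 => L1 s | _ => L2 s end.
Definition nxt (h : nat) (b : bool) := if b then (S h) mod 3 else (S (S h)) mod 3.

Definition step (T : list nat -> Prop) (w : baire) (s : stg) : stg :=
  let h := hh s in
  let b := negb (gc s <? w (gn s)) in
  let q := nxt h b in
  let r := 3 - h - q in
  let lq := getL s q in
  let tq := spn T (lq ++ [sc T lq]) in
  let l' := length tq in
  let lr := getL s r in
  let sr := ext T lr (l' - length lr) in
  let lh := getL s h in
  let V := bigc T lh (S (list_max (tq ++ sr ++ lh))) in
  let sh := ext T (lh ++ [V]) (l' - S (length lh)) in
  let nl j := if j =? q then tq else if j =? r then sr else sh in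
  mkst (nl 0) (nl 1) (nl 2) q (if b then S (gn s) else gn s) (if b then 0 else S (gc s)).

Lemma roles h b : h < 3 -> let q := nxt h b in let r := 3 - h - q in
  q < 3 /\ r < 3 /\ q <> h /\ r <> h /\ r <> q /\ (forall j, j < 3 -> j = h \/ j = q \/ j = r)
  /\ (q = S h mod 3 <-> b = true).
Proof.
  intros Hh. destruct h as [|[|[|h]]]; try lia; destruct b; simpl; repeat split; try lia; try discriminate.
Qed.

Definition Inv (T : list nat -> Prop) (w : baire) (s : stg) :=
  hh s < 3 /\ (forall j, j < 3 -> length (getL s j) = length (L0 s) /\ T (getL s j))
  /\ splitting T (getL s (hh s)) /\ gc s <= w (gn s).

Lemma In_le_max x l : In x l -> x <= list_max l.
Proof.
  intros Hx. pose proof (proj1 (list_max_le l (list_max l)) (le_n _)) as H.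
  rewrite Forall_forall in H. auto.
Qed.

Lemma getL_step T w s j : j < 3 ->
  getL (step T w s) j =
  (let h := hh s in
  let b := negb (gc s <? w (gn s)) in
  let q := nxt h b in
  let r := 3 - h - q in
  let lq := getL s q in
  let tq := spn T (lq ++ [sc T lq]) in
  let l' := length tq in
  let lr := getL s r in
  let sr := ext T lr (l' - length lr) in
  let lh := getL s h in
  let V := bigc T lh (S (list_max (tq ++ sr ++ lh))) in
  let sh := ext T (lh ++ [V]) (l' - S (length lh)) in
  if j =? q then tq else if j =? r then sr else sh).
Proof. intros Hj. destruct j as [|[|[|j]]]; try lia; reflexivity. Qed.

Lemma step_spec T w s : superperfect_tree T -> Inv T w s ->
  exists V,
   Inv T w (step T w s) /\ length (L0 s) < length (L0 (step T w s)) /\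
   (forall j, j < 3 -> prefix (getL s j) (getL (step T w s) j)) /\
   hh (step T w s) <> hh s /\
   nth (length (L0 s)) (getL (step T w s) (hh s)) 0 = V /\
   (forall j, j < 3 -> j <> hh s -> forall x, In x (getL (step T w s) j) -> x < V) /\
   (forall x, In x (getL s (hh s)) -> x < V) /\
   (hh (step T w s) = S (hh s) mod 3 <-> negb (gc s <? w (gn s)) = true) /\
   gn (step T w s) = (if negb (gc s <? w (gn s)) then S (gn s) else gn s) /\
   gc (step T w s) = (if negb (gc s <? w (gn s)) then 0 else S (gc s)).
Proof.
  intros HT [Hh [Hl [Hsp Hg]]].
  pose proof (fun j Hj => getL_step T w s j Hj) as HG. cbv zeta in HG.
  set (h := hh s) in *. set (b := negb (gc s <? w (gn s))) in *.
  set (q := nxt h b) in *. set (r := 3 - h - q) in *.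
  destruct (roles h b Hh) as [Hq [Hr [Hqh [Hrh [Hrq [Hall Hbit]]]]]]. fold q r in Hq, Hr, Hqh, Hrh, Hrq, Hall, Hbit.
  set (lq := getL s q) in *. set (tq := spn T (lq ++ [sc T lq])) in *.
  set (lr := getL s r) in *. set (sr := ext T lr (length tq - length lr)) in *.
  set (lh := getL s h) in *.
  set (V := bigc T lh (S (list_max (tq ++ sr ++ lh)))) in *.
  set (sh := ext T (lh ++ [V]) (length tq - S (length lh))) in *.
  set (l := length (L0 s)) in *.
  destruct (Hl q Hq) as [Hlq HTq]. destruct (Hl r Hr) as [Hlr HTr]. destruct (Hl h Hh) as [Hlh HTh].
  fold lq in Hlq, HTq. fold lr in Hlr, HTr. fold lh in Hlh, HTh.
  pose proof (sc_spec T lq HT HTq) as Hsc.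
  destruct (spn_spec T _ HT Hsc) as [Ptq [HTtq Hsptq]]. fold tq in Ptq, HTtq, Hsptq.
  assert (Hltq : l < length tq). { apply prefix_len in Ptq. rewrite length_app in Ptq. simpl in Ptq. lia. }
  destruct (ext_spec T lr (length tq - length lr) HT HTr) as [HTsr [Hlsr Psr]]. fold sr in HTsr, Hlsr, Psr.
  destruct (bigc_spec T lh (S (list_max (tq ++ sr ++ lh))) Hsp) as [HV HTV]. fold V in HV, HTV.
  destruct (ext_spec T (lh ++ [V]) (length tq - S (length lh)) HT HTV) as [HTsh [Hlsh Psh]]. fold sh in HTsh, Hlsh, Psh.
  rewrite length_app in Hlsh. simpl in Hlsh.
  assert (Hnl : forall j, j < 3 -> getL (step T w s) j = if j =? q then tq else if j =? r then sr else sh) by exact HG.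
  assert (Ghq : getL (step T w s) q = tq). { rewrite Hnl by auto. rewrite Nat.eqb_refl. auto. }
  assert (Ghr : getL (step T w s) r = sr). { rewrite Hnl by auto. destruct (Nat.eqb_spec r q); try lia. rewrite Nat.eqb_refl. auto. }
  assert (Ghh : getL (step T w s) h = sh). { rewrite Hnl by auto. destruct (Nat.eqb_spec h q); try lia. destruct (Nat.eqb_spec h r); try lia. auto. }
  assert (HL0 : length (L0 (step T w s)) = length tq).
  { change (L0 (step T w s)) with (getL (step T w s) 0).
    destruct (Hall 0 ltac:(lia)) as [E|[E|E]]; rewrite <- E in *; [rewrite Ghh|rewrite Ghq|rewrite Ghr]; lia. }
  assert (Hmax : forall x, In x (tq ++ sr ++ lh) -> x < V).
  { intros x Hx. apply In_le_max in Hx. lia. }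
  exists V. split; [|split; [|split; [|split; [|split; [|split; [|split; [|split; [|split]]]]]]]].
  - split; [|split; [|split]].
    + exact Hq.
    + intros j Hj. rewrite HL0. destruct (Hall j Hj) as [E|[E|E]]; subst j.
      * rewrite Ghh. split; auto. lia.
      * rewrite Ghq. auto.
      * rewrite Ghr. split; auto. lia.
    + change (hh (step T w s)) with q. rewrite Ghq. auto.
    + change (gc (step T w s)) with (if b then 0 else S (gc s)).
      change (gn (step T w s)) with (if b then S (gn s) else gn s).
      unfold b. destruct (Nat.ltb_spec (gc s) (w (gn s))); simpl; lia.
  - rewrite HL0. lia.
  - intros j Hj. destruct (Hall j Hj) as [E|[E|E]]; subst j.
    + rewrite Ghh. eapply prefix_trans; [|exact Psh]. eexists; eauto.
    + rewrite Ghq. eapply prefix_trans; [|exact Ptq]. eexists; eauto.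
    + rewrite Ghr. auto.
  - change (hh (step T w s)) with q. auto.
  - fold h. rewrite Ghh. rewrite (prefix_nth _ _ l Psh) by (rewrite length_app; simpl; lia).
    rewrite app_nth2 by lia. replace (l - length lh) with 0 by lia. reflexivity.
  - intros j Hj Hjh x Hx. destruct (Hall j Hj) as [E|[E|E]]; subst j; try lia.
    + rewrite Ghq in Hx. apply Hmax. apply in_or_app; auto.
    + rewrite Ghr in Hx. apply Hmax. apply in_or_app; right; apply in_or_app; auto.
  - intros x Hx. apply Hmax. apply in_or_app; right; apply in_or_app; auto.
  - change (hh (step T w s)) with q. auto.
  - reflexivity.
  - reflexivity.
Qed.

Lemma restr_prefix (f : baire) l n : n <= length l -> (forall i, i < n -> f i = nth i l 0) -> prefix (restr f n) l.
Proof.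
  intros Hn Hf. induction n.
  - exists l. reflexivity.
  - destruct IHn as [u Hu]; try lia; auto.
    destruct u as [|a u].
    + rewrite app_nil_r in Hu. rewrite Hu in Hn. unfold restr in Hn. rewrite length_map, length_seq in Hn. lia.
    + exists u. rewrite restr_S. rewrite <- app_assoc. simpl.
      assert (a = f n). { rewrite Hf by lia. rewrite Hu. rewrite app_nth2; unfold restr; rewrite length_map, length_seq; [|lia].
        rewrite Nat.sub_diag. reflexivity. }
      subst. auto.
Qed.

Definition lim (c : nat -> list nat) : baire := fun i => nth i (c (S i)) 0.

Lemma chain_lim (c : nat -> list nat) : (forall k, prefix (c k) (c (S k))) -> (forall k, k <= length (c k)) ->
  (forall k k', k <= k' -> prefix (c k) (c k')) /\
  (forall k i, i < length (c k) -> lim c i = nth i (c k) 0) /\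
  (forall n, prefix (restr (lim c) n) (c n)).
Proof.
  intros Hp Hl.
  assert (H1 : forall k k', k <= k' -> prefix (c k) (c k')).
  { intros k k' H. induction H; [apply prefix_refl|]. eapply prefix_trans; eauto. }
  assert (H2 : forall k i, i < length (c k) -> lim c i = nth i (c k) 0).
  { intros k i Hi. unfold lim. destruct (le_ge_dec k (S i)) as [H|H].
    - apply prefix_nth; auto.
    - symmetry. apply prefix_nth; auto; specialize (Hl (S i)); lia. }
  split; auto. split; auto.
  intros n. apply restr_prefix; auto. intros i Hi. apply H2. specialize (Hl n); lia.
Qed.

Lemma branch_of_chain T (c : nat -> list nat) : superperfect_tree T ->
  (forall k, prefix (c k) (c (S k))) -> (forall k, k <= length (c k)) -> (forall k, T (c k)) ->
  branches T (lim c).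
Proof.
  intros HT Hp Hl HTc n. destruct (chain_lim c Hp Hl) as [_ [_ H3]].
  eapply tree_prefix'; eauto.
Qed.

Fixpoint stage T w s0 k := match k with 0 => s0 | S k' => step T w (stage T w s0 k') end.
Definition ell T w s0 k := length (L0 (stage T w s0 k)).
Definition XX T w s0 j : baire := lim (fun k => getL (stage T w s0 k) j).

Lemma inv_stage T w s0 k : superperfect_tree T -> Inv T w s0 -> Inv T w (stage T w s0 k).
Proof.
  intros HT H0. induction k; simpl; auto.
  destruct (step_spec T w _ HT IHk) as [V [H _]]; auto.
Qed.

Lemma ell_lt T w s0 k : superperfect_tree T -> Inv T w s0 -> ell T w s0 k < ell T w s0 (S k).
Proof.
  intros HT H0. unfold ell. simpl. destruct (step_spec T w _ HT (inv_stage T w s0 k HT H0)) as [V [_ [H _]]]; auto.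
Qed.

Lemma ell_mono T w s0 a b : superperfect_tree T -> Inv T w s0 -> a <= b -> ell T w s0 a <= ell T w s0 b.
Proof. intros HT H0 H. induction H; auto. pose proof (ell_lt T w s0 m HT H0). lia. Qed.

Lemma ell_ge T w s0 k : superperfect_tree T -> Inv T w s0 -> k <= ell T w s0 k.
Proof. intros HT H0. induction k; [lia|]. pose proof (ell_lt T w s0 k HT H0). lia. Qed.

Lemma len_stage T w s0 k j : superperfect_tree T -> Inv T w s0 -> j < 3 -> length (getL (stage T w s0 k) j) = ell T w s0 k.
Proof. intros HT H0 Hj. destruct (inv_stage T w s0 k HT H0) as [_ [H _]]. apply H; auto. Qed.

Lemma chain_stage T w s0 j : superperfect_tree T -> Inv T w s0 -> j < 3 ->
  (forall k, prefix (getL (stage T w s0 k) j) (getL (stage T w s0 (S k)) j)) /\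
  (forall k, k <= length (getL (stage T w s0 k) j)).
Proof.
  intros HT H0 Hj. split.
  - intros k. simpl. destruct (step_spec T w _ HT (inv_stage T w s0 k HT H0)) as [V [_ [_ [H _]]]]; auto.
  - intros k. rewrite len_stage; auto. apply ell_ge; auto.
Qed.

Lemma XX_nth T w s0 j k i : superperfect_tree T -> Inv T w s0 -> j < 3 -> i < ell T w s0 k ->
  XX T w s0 j i = nth i (getL (stage T w s0 k) j) 0.
Proof.
  intros HT H0 Hj Hi. destruct (chain_stage T w s0 j HT H0 Hj) as [A B].
  destruct (chain_lim _ A B) as [_ [H2 _]]. unfold XX. apply H2. rewrite len_stage; auto.
Qed.

Lemma XX_branch T w s0 j : superperfect_tree T -> Inv T w s0 -> j < 3 -> branches T (XX T w s0 j).
Proof.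
  intros HT H0 Hj. destruct (chain_stage T w s0 j HT H0 Hj) as [A B].
  apply branch_of_chain; auto. intros k. destruct (inv_stage T w s0 k HT H0) as [_ [H _]]. apply H; auto.
Qed.

Lemma XX_event T w s0 k : superperfect_tree T -> Inv T w s0 ->
  let h := hh (stage T w s0 k) in
  (forall j i, j < 3 -> j <> h -> i < ell T w s0 (S k) -> XX T w s0 j i < XX T w s0 h (ell T w s0 k)) /\
  (forall i, i < ell T w s0 k -> XX T w s0 h i < XX T w s0 h (ell T w s0 k)).
Proof.
  intros HT H0 h.
  pose proof (inv_stage T w s0 k HT H0) as Ik.
  destruct (step_spec T w _ HT Ik) as [V [_ [Hlt [_ [_ [HV [Ho [Hh _]]]]]]]].
  assert (Hh3 : h < 3) by (apply Ik).
  assert (EV : XX T w s0 h (ell T w s0 k) = V).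
  { rewrite (XX_nth T w s0 h (S k)); auto; apply ell_lt; auto. }
  rewrite EV. split.
  - intros j i Hj Hjh Hi. rewrite (XX_nth T w s0 j (S k)); auto. apply (Ho j Hj Hjh). apply nth_In.
    change (step T w (stage T w s0 k)) with (stage T w s0 (S k)). rewrite len_stage; auto.
  - intros i Hi. rewrite (XX_nth T w s0 h k); auto. apply Hh. apply nth_In. rewrite len_stage; auto.
Qed.

Lemma mx_ge x y z i' i : i' < i -> x i' <= mx x y z i /\ y i' <= mx x y z i /\ z i' <= mx x y z i.
Proof.
  induction i; intros H; [lia|]. simpl.
  destruct (Nat.eq_dec i' i) as [E|E]; [subst; lia|]. destruct IHi; lia.
Qed.

Lemma mx_lt x y z i V : 0 < V -> (forall i', i' < i -> x i' < V /\ y i' < V /\ z i' < V) -> mx x y z i < V.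
Proof.
  intros HV H. induction i; simpl; auto.
  destruct (H i) as [A [B C]]; [lia|]. assert (mx x y z i < V) by (apply IHi; intros; apply H; lia). lia.
Qed.

Definition val3 (x y z : baire) j := match j with 0 => x | 1 => y | _ => z end.

Lemma rec3_some x y z i j : j < 3 -> mx x y z i < val3 x y z j i ->
  (forall j', j' < 3 -> j' <> j -> val3 x y z j' i < val3 x y z j i) -> rec3 x y z i = Some j.
Proof.
  intros Hj Hm Ho. pose proof (Ho 0) as H0. pose proof (Ho 1) as H1. pose proof (Ho 2) as H2.
  unfold rec3. destruct j as [|[|[|j]]]; try lia; simpl in *;
  repeat match goal with |- context [?a <? ?b] => destruct (Nat.ltb_spec a b) end; simpl; try reflexivity;
  try (exfalso; try specialize (H0 ltac:(lia) ltac:(lia)); try specialize (H1 ltac:(lia) ltac:(lia));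
       try specialize (H2 ltac:(lia) ltac:(lia)); lia).
Qed.

Lemma rec3_cases x y z i : rec3 x y z i = None \/
  exists j, j < 3 /\ rec3 x y z i = Some j /\ mx x y z i < val3 x y z j i.
Proof.
  unfold rec3.
  repeat match goal with |- context [?a <? ?b] => destruct (Nat.ltb_spec a b) end; simpl; auto;
  right; first [exists 0; simpl; repeat split; auto; lia | exists 1; simpl; repeat split; auto; lia
               | exists 2; simpl; repeat split; auto; lia].
Qed.

Lemma rec3_eq x y z i : x i = y i -> y i = z i -> rec3 x y z i = None.
Proof.
  intros A B. unfold rec3. rewrite A, B.
  repeat match goal with |- context [?a <? ?b] => destruct (Nat.ltb_spec a b) end; simpl; auto; lia.
Qed.

Definition EE T w s0 k := match k with 0 => mkd None [] 0
  | S k' => mkd (Some (hh (stage T w s0 k'))) (map w (seq 0 (gn (stage T w s0 k')))) (gc (stage T w s0 k')) end.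

Lemma upd_trans p j out c : p <> j -> upd (mkd (Some p) out c) (Some j) =
  if j =? S p mod 3 then mkd (Some j) (out ++ [c]) 0 else mkd (Some j) out (S c).
Proof. intros H. unfold upd. simpl. destruct (Nat.eqb_spec p j); [congruence|reflexivity]. Qed.

Lemma upd_event T w s0 k : superperfect_tree T -> Inv T w s0 -> gn s0 = 0 -> gc s0 = 0 ->
  upd (EE T w s0 k) (Some (hh (stage T w s0 k))) = EE T w s0 (S k).
Proof.
  intros HT H0 Hn Hc. destruct k as [|k].
  - simpl. rewrite Hn, Hc. reflexivity.
  - pose proof (inv_stage T w s0 k HT H0) as Ik.
    destruct (step_spec T w _ HT Ik) as [V [_ [_ [_ [Hne [_ [_ [_ [Hiff [Hgn Hgc]]]]]]]]]].
    set (s := stage T w s0 k) in *. set (s' := step T w s) in *.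
    change (stage T w s0 (S k)) with s'.
    change (EE T w s0 (S k)) with (mkd (Some (hh s)) (map w (seq 0 (gn s))) (gc s)).
    change (EE T w s0 (S (S k))) with (mkd (Some (hh s')) (map w (seq 0 (gn s'))) (gc s')).
    rewrite upd_trans by auto.
    destruct Ik as [_ [_ [_ Hg]]]. fold s in Hg.
    destruct (Nat.eqb_spec (hh s') (S (hh s) mod 3)) as [E|E].
    + pose proof (proj1 Hiff E) as E'. rewrite E' in Hgn, Hgc. cbv beta iota in Hgn, Hgc.
      rewrite Hgn, Hgc. apply negb_true_iff, Nat.ltb_ge in E'.
      rewrite seq_S, map_app. simpl. replace (gc s) with (w (gn s)) by lia. reflexivity.
    + destruct (negb (gc s <? w (gn s))) eqn:B.
      * exfalso. apply E. apply Hiff. reflexivity.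
      * cbv beta iota in Hgn, Hgc. rewrite Hgn, Hgc. reflexivity.
Qed.

Lemma XX_val3 T w s0 j : j < 3 -> XX T w s0 j = val3 (XX T w s0 0) (XX T w s0 1) (XX T w s0 2) j.
Proof. intros Hj. destruct j as [|[|[|j]]]; try lia; reflexivity. Qed.

Lemma dec_inv T w s0 : superperfect_tree T -> Inv T w s0 -> gn s0 = 0 -> gc s0 = 0 ->
  L1 s0 = L0 s0 -> L2 s0 = L0 s0 ->
  forall N, exists k, N <= ell T w s0 k /\ (match k with 0 => True | S k' => ell T w s0 k' < N end) /\
    dstate (XX T w s0 0) (XX T w s0 1) (XX T w s0 2) N = EE T w s0 k.
Proof.
  intros HT H0 Hn Hc E1 E2.
  set (x := XX T w s0 0). set (y := XX T w s0 1). set (z := XX T w s0 2).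
  induction N.
  - exists 0. simpl. split; [lia|split; auto].
  - destruct IHN as [k [Hk [Hp Hd]]]. simpl. rewrite Hd.
    destruct (Nat.eq_dec N (ell T w s0 k)) as [EN|EN].
    +
      exists (S k). split; [pose proof (ell_lt T w s0 k HT H0); lia|split; [lia|]].
      set (h := hh (stage T w s0 k)).
      assert (Hh3 : h < 3) by apply (inv_stage T w s0 k HT H0).
      destruct (XX_event T w s0 k HT H0) as [A B]. fold h in A, B.
      pose proof (ell_lt T w s0 k HT H0) as Hl.
      assert (Hother : forall j, j < 3 -> j <> h -> val3 x y z j N < val3 x y z h N).
      { intros j Hj Hjh. unfold x, y, z. rewrite <- !XX_val3 by auto. rewrite EN. apply A; auto; lia. }
      assert (Hpos : 0 < val3 x y z h N).
      { destruct (Nat.eq_dec h 0) as [E|E]; [specialize (Hother 1)|specialize (Hother 0)]; 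
        specialize (Hother ltac:(lia) ltac:(lia)); lia. }
      replace (rec3 x y z N) with (Some h).
      2:{ symmetry. apply rec3_some; auto. apply mx_lt; auto. intros i' Hi'.
          assert (forall j, j < 3 -> val3 x y z j i' < val3 x y z h N).
          { intros j Hj. unfold x, y, z. rewrite <- !XX_val3 by auto. rewrite EN.
            destruct (Nat.eq_dec j h) as [E|E]; [subst j; apply B; lia| apply A; auto; lia]. }
          repeat split; [apply (H 0)|apply (H 1)|apply (H 2)]; lia. }
      apply upd_event; auto.
    + exists k. split; [lia|split; [destruct k; lia|]].
      destruct k as [|k].
      * replace (rec3 x y z N) with (@None nat); [reflexivity|].
        symmetry. apply rec3_eq; unfold x, y, z; rewrite !(XX_nth T w s0 _ 0 N) by (auto; lia);
        simpl; rewrite ?E1, ?E2; reflexivity.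
      * set (h := hh (stage T w s0 k)).
        assert (Hh3 : h < 3) by apply (inv_stage T w s0 k HT H0).
        destruct (XX_event T w s0 k HT H0) as [A B]. fold h in A, B.
        destruct (rec3_cases x y z N) as [R|[j [Hj [R Hm]]]]; rewrite R; [reflexivity|].
        destruct (Nat.eq_dec j h) as [E|E].
        -- subst j. simpl. rewrite Nat.eqb_refl. reflexivity.
        -- exfalso. assert (val3 x y z j N < XX T w s0 h (ell T w s0 k)).
           { unfold x, y, z. rewrite <- XX_val3 by auto. apply A; auto. lia. }
           assert (XX T w s0 h (ell T w s0 k) <= mx x y z N).
           { rewrite (XX_val3 T w s0 h Hh3). destruct (mx_ge x y z (ell T w s0 k) N) as [P [Q R']]; [lia|].
             destruct h as [|[|[|]]]; simpl; auto; lia. }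
           lia.
Qed.

Lemma gn_next T w s0 : superperfect_tree T -> Inv T w s0 ->
  forall d k, w (gn (stage T w s0 k)) - gc (stage T w s0 k) = d ->
  exists k', gn (stage T w s0 k') = S (gn (stage T w s0 k)).
Proof.
  intros HT H0 d. induction d; intros k Hd;
  destruct (step_spec T w _ HT (inv_stage T w s0 k HT H0)) as [V [_ [_ [_ [_ [_ [_ [_ [_ [Hgn Hgc]]]]]]]]]];
  destruct (Nat.ltb_spec (gc (stage T w s0 k)) (w (gn (stage T w s0 k)))) as [L|L];
  cbv beta iota in Hgn, Hgc; simpl negb in Hgn, Hgc; cbv beta iota in Hgn, Hgc.
  - lia.
  - exists (S k). exact Hgn.
  - destruct (IHd (S k)) as [k' Hk'].
    + change (stage T w s0 (S k)) with (step T w (stage T w s0 k)). rewrite Hgn, Hgc. lia.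
    + exists k'. rewrite Hk'. change (stage T w s0 (S k)) with (step T w (stage T w s0 k)). rewrite Hgn. reflexivity.
  - exists (S k). exact Hgn.
Qed.

Lemma gn_unbounded T w s0 : superperfect_tree T -> Inv T w s0 ->
  forall n, exists k, n < gn (stage T w s0 k).
Proof.
  intros HT H0. assert (forall n, exists k, n <= gn (stage T w s0 k)).
  { induction n. exists 0; lia. destruct IHn as [k Hk].
    destruct (Nat.eq_dec n (gn (stage T w s0 k))) as [E|E].
    - destruct (gn_next T w s0 HT H0 _ k eq_refl) as [k' Hk']. exists k'. lia.
    - exists k. lia. }
  intros n. destruct (H (S n)) as [k Hk]. exists k. lia.
Qed.

Lemma FF_decode T w s0 : superperfect_tree T -> Inv T w s0 -> gn s0 = 0 -> gc s0 = 0 ->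
  L1 s0 = L0 s0 -> L2 s0 = L0 s0 ->
  FF ((XX T w s0 0, XX T w s0 1), XX T w s0 2) = w.
Proof.
  intros HT H0 Hn Hc E1 E2. apply functional_extensionality. intros n.
  set (a := ((XX T w s0 0, XX T w s0 1), XX T w s0 2)).
  assert (Hform : forall N, exists m, outN a N = map w (seq 0 m)).
  { intros N. destruct (dec_inv T w s0 HT H0 Hn Hc E1 E2 N) as [k [_ [_ Hd]]].
    unfold outN. simpl. rewrite Hd. destruct k; simpl; [exists 0; auto| eauto]. }
  assert (Hex : exists N, n < length (outN a N)).
  { destruct (gn_unbounded T w s0 HT H0 n) as [k Hk].
    destruct (dec_inv T w s0 HT H0 Hn Hc E1 E2 (S (ell T w s0 k))) as [k2 [B1 [B2 Hd]]].
    exists (S (ell T w s0 k)). unfold outN. simpl fst; simpl snd. rewrite Hd.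
    destruct k2 as [|k2].
    - pose proof (ell_mono T w s0 0 k HT H0 ltac:(lia)). lia.
    - assert (k2 = k).
      { destruct (Nat.lt_trichotomy k2 k) as [L|[L|L]]; auto.
        - pose proof (ell_mono T w s0 (S k2) k HT H0 ltac:(lia)). lia.
        - pose proof (ell_mono T w s0 (S k) k2 HT H0 ltac:(lia)). pose proof (ell_lt T w s0 k HT H0). lia. }
      subst. simpl. rewrite length_map, length_seq. auto. }
  unfold FF. pose proof (epsilon_spec (inhabits 0) _ Hex) as He. cbv beta in He.
  fold a. destruct (Hform (epsilon (inhabits 0) (fun N => n < length (outN a N)))) as [m Hm].
  rewrite Hm in *. rewrite length_map, length_seq in He.
  rewrite nth_indep with (d' := w 0) by (rewrite length_map, length_seq; auto).
  rewrite map_nth, seq_nth by auto. reflexivity.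
Qed.

Theorem proposition5p4 :
  exists f : triple -> baire,
    borel_fun f /\
    forall A : baire -> Prop, superperfect_set A -> ~ free_for f A.
Proof.
  exists FF. split; [apply FF_borel|].
  intros A [T [HT HA]] Hfree.
  assert (HT0 : T []) by (apply HT).
  destruct (spn_spec T [] HT HT0) as [_ [HTt Hspt]].
  set (t := spn T []) in *.
  destruct (bigc_spec T t 0 Hspt) as [_ HTcw]. set (cw := bigc T t 0) in *.
  destruct (bigc_spec T t (S cw) Hspt) as [Hc HTc]. set (c := bigc T t (S cw)) in *.
  destruct (spn_spec T (t ++ [c]) HT HTc) as [Prho [HTrho Hsprho]]. set (rho := spn T (t ++ [c])) in *.
  set (s0 := mkst rho rho rho 0 0 0).
  set (cw_chain := fun k => ext T (t ++ [cw]) k).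
  set (w := lim cw_chain).
  assert (Hcp : forall k, prefix (cw_chain k) (cw_chain (S k))) by (intros k; apply ext_mono).
  assert (Hcl : forall k, k <= length (cw_chain k)).
  { intros k. unfold cw_chain. destruct (ext_spec T (t ++ [cw]) k HT HTcw) as [_ [L _]]. lia. }
  assert (Hwb : branches T w).
  { apply branch_of_chain; auto. intros k. apply ext_spec; auto. }
  assert (H0 : Inv T w s0).
  { split; [simpl; lia|split; [|split; [simpl; auto|simpl; lia]]].
    intros j Hj. destruct j as [|[|[|j]]]; try lia; simpl; auto. }
  pose proof (FF_decode T w s0 HT H0 eq_refl eq_refl eq_refl eq_refl) as Hdec.
  assert (Hbr : forall j, j < 3 -> A (XX T w s0 j)).
  { intros j Hj. apply HA. apply XX_branch; auto. }
  assert (Hwt : w (length t) = cw).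
  { destruct (chain_lim cw_chain Hcp Hcl) as [_ [H2 _]]. unfold w. rewrite (H2 0).
    - unfold cw_chain. simpl ext. rewrite app_nth2 by lia. rewrite Nat.sub_diag. reflexivity.
    - unfold cw_chain. simpl ext. rewrite length_app. simpl. lia. }
  assert (Hxt : forall j, j < 3 -> XX T w s0 j (length t) = c).
  { intros j Hj. assert (Hlt : length t < ell T w s0 0).
    { unfold ell. simpl. apply prefix_len in Prho. rewrite length_app in Prho. simpl in Prho. lia. }
    rewrite (XX_nth T w s0 j 0) by auto.
    replace (getL (stage T w s0 0) j) with rho by (destruct j as [|[|[|j]]]; reflexivity).
    rewrite (prefix_nth _ _ _ Prho) by (rewrite length_app; simpl; lia).
    rewrite app_nth2 by lia. rewrite Nat.sub_diag. reflexivity. }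
  specialize (Hfree _ _ _ (Hbr 0 ltac:(lia)) (Hbr 1 ltac:(lia)) (Hbr 2 ltac:(lia))).
  cbv zeta in Hfree. rewrite Hdec in Hfree.
  assert (Hne : forall j, j < 3 -> w <> XX T w s0 j).
  { intros j Hj E. pose proof (Hxt j Hj) as X. rewrite <- E, Hwt in X. lia. }
  destruct Hfree as [E|[E|[E|E]]].
  - apply (Hne 0); auto.
  - apply (Hne 1); auto.
  - apply (Hne 2); auto.
  - apply E. apply HA. auto.
Qed.
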